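(* Let $(M,g_M)$, $(N,g_N)$ be compact Riemannian manifolds with $m=\dim M\ge 2$, and suppose there is $\sigma>0$ with $\sec_M>-\sigma$ and $\operatorname{Ric}_M\ge(m-1)\sigma\ge(m-1)\sec_N$. Let $f:M\to N$ be strictly area decreasing, let $F$ be the mean curvature flow of its graph in $M\times N$, graphical as $F_t\circ\phi_t=(I_M,f_t)$, and write $f$ for $f_t$ at a fixed time. Then at every point $$\mathcal{B}:=\sum_{l,k=1}^m\bigl(\lambda_l^2R_M-f^*R_N\bigr)(e_l,e_k,e_l,e_k)\ge 0 .$$
   Context: $M\times N$ carries the product metric; the mean curvature flow is $\frac{dF}{dt}=H$. At a point $x\in M$, $\lambda_1^2\le\dots\le\lambda_m^2$ ($\lambda_i\ge0$) are the eigenvalues of $f^*g_N$ with respect to $g_M$, $\{\alpha_1,\dots,\alpha_m\}$ is a $g_M$-orthonormal eigenbasis of $f^*g_N$ with $f^*g_N(\alpha_i,\alpha_i)=\lambda_i^2$, and $e_i:=(1+\lambda_i^2)^{-1/2}\alpha_i\in T_xM$, which form an orthonormal basis for the induced graph metric $g_M+f^*g_N$ (these correspond to the tangent vectors $(1+\lambda_i^2)^{-1/2}(\alpha_i\oplus df(\alpha_i))$ of the graph). $R_M$ and $R_N$ are the $(0,4)$ curvature tensors of $M$ and $N$, with the convention $R(X,Y,X,Y)=\sec(X\wedge Y)|X\wedge Y|^2$, and $f^*R_N(e_l,e_k,e_l,e_k)=R_N(df(e_l),df(e_k),df(e_l),df(e_k))$. $f$ strictly area decreasing means $\lambda_i\lambda_j<1$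 for $i<j$. *)

(* Defs.v *)
(* Pointwise (linear-algebra) rendering at a point x in M. *)
From HB Require Import structures.
From mathcomp Require Import all_boot all_order all_algebra.
Set Implicit Arguments. Unset Strict Implicit. Unset Printing Implicit Defensive.
Import Order.TTheory GRing.Theory Num.Theory.
Local Open Scope ring_scope.

(* Tangent spaces T_xM = 'rV_m, T_{f x}N = 'rV_n, in g-orthonormal coordinates,
   so that the metrics are the standard dot products. *)
Definition dotv (R : rcfType) (k : nat) (u v : 'rV[R]_k) : R := (u *m v^T) 0 0.

Definition wedge2 (R : rcfType) (k : nat) (X Y : 'rV[R]_k) : R :=
  dotv X X * dotv Y Y - dotv X Y ^+ 2.

Definition basisv (R : rcfType) (k : nat) (i : 'I_k) : 'rV[R]_k :=
  \row_j (i == j)%:R.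

Definition curv_tensor (R : rcfType) (k : nat)
  (Rm : 'rV[R]_k -> 'rV[R]_k -> 'rV[R]_k -> 'rV[R]_k -> R) : Prop :=
  [/\ (forall a X X' Y Z W, Rm (a *: X + X') Y Z W = a * Rm X Y Z W + Rm X' Y Z W),
      (forall X Y Z W, Rm X Y Z W = - Rm Y X Z W),
      (forall X Y Z W, Rm X Y Z W = Rm Z W X Y) &
      (forall X Y Z W, Rm X Y Z W + Rm Y Z X W + Rm Z X Y W = 0)].

Definition ricci (R : rcfType) (k : nat)
  (Rm : 'rV[R]_k -> 'rV[R]_k -> 'rV[R]_k -> 'rV[R]_k -> R) (Y : 'rV[R]_k) : R :=
  \sum_(i < k) Rm (@basisv R k i) Y (@basisv R k i) Y.

Definition sec_gt (R : rcfType) (k : nat) Rm (s : R) : Prop :=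
  forall X Y : 'rV[R]_k, 0 < wedge2 X Y -> - s * wedge2 X Y < Rm X Y X Y.

Definition sec_le (R : rcfType) (k : nat) Rm (s : R) : Prop :=
  forall X Y : 'rV[R]_k, 0 < wedge2 X Y -> Rm X Y X Y <= s * wedge2 X Y.

Definition ric_ge (R : rcfType) (k : nat) Rm (c : R) : Prop :=
  forall Y : 'rV[R]_k, c * dotv Y Y <= ricci Rm Y.

(* Main.v *)
Require Import Defs.
From mathcomp Require Import all_boot all_order all_algebra.
From mathcomp Require Import ring lra.
Set Implicit Arguments. Unset Strict Implicit.
Import Order.TTheory GRing.Theory Num.Theory.
Local Open Scope ring_scope.

Section Curv.
Variables (R : rcfType) (k : nat).
Variable Rm : 'rV[R]_k -> 'rV[R]_k -> 'rV[R]_k -> 'rV[R]_k -> R.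
Hypothesis hR : curv_tensor Rm.

Lemma Rm_add1 X X' Y Z W : Rm (X + X') Y Z W = Rm X Y Z W + Rm X' Y Z W.
Proof. by case: hR => L _ _ _; have := L 1 X X' Y Z W; rewrite scale1r mul1r. Qed.

Lemma Rm_01 Y Z W : Rm 0 Y Z W = 0.
Proof.
have := Rm_add1 0 0 Y Z W; rewrite addr0 => H.
lra.
Qed.

Lemma Rm_scale1 a X Y Z W : Rm (a *: X) Y Z W = a * Rm X Y Z W.
Proof. by case: hR => L _ _ _; have := L a X 0 Y Z W; rewrite addr0 Rm_01 addr0. Qed.

Lemma Rm_scale2 a X Y Z W : Rm X (a *: Y) Z W = a * Rm X Y Z W.
Proof. case: hR => _ A _ _; by rewrite A Rm_scale1 (A Y) mulrN opprK. Qed.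

Lemma Rm_scale3 a X Y Z W : Rm X Y (a *: Z) W = a * Rm X Y Z W.
Proof. case: hR => _ _ P _; by rewrite P Rm_scale1 P. Qed.

Lemma Rm_scale4 a X Y Z W : Rm X Y Z (a *: W) = a * Rm X Y Z W.
Proof. case: hR => _ _ P _; by rewrite P Rm_scale2 P. Qed.

Lemma Rm_add3 X Y Z Z' W : Rm X Y (Z + Z') W = Rm X Y Z W + Rm X Y Z' W.
Proof. case: hR => _ _ P _; by rewrite P Rm_add1 !(P _ _ X). Qed.

Lemma Rm_diag X Z W : Rm X X Z W = 0.
Proof.
case: hR => _ A _ _; have := A X X Z W => /eqP.
rewrite -subr_eq0 opprK -mulr2n mulrn_eq0 /= => /eqP //.
Qed.

Lemma Rm_sym X Y : Rm Y X Y X = Rm X Y X Y.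
Proof. case: hR => _ A P _; by rewrite A P A opprK. Qed.

Lemma Rm_sum1 I (r : seq I) (c : I -> R) (v : I -> 'rV[R]_k) Y Z W :
  Rm (\sum_(i <- r) c i *: v i) Y Z W = \sum_(i <- r) c i * Rm (v i) Y Z W.
Proof.
elim/big_rec2: _ => [|i y1 y2 _ <-]; first by rewrite Rm_01.
by rewrite Rm_add1 Rm_scale1.
Qed.

Lemma Rm_sum3 I (r : seq I) (c : I -> R) (v : I -> 'rV[R]_k) X Y W :
  Rm X Y (\sum_(i <- r) c i *: v i) W = \sum_(i <- r) c i * Rm X Y (v i) W.
Proof.
case: hR => _ _ P _; rewrite P Rm_sum1; apply: eq_bigr => i _; by rewrite P.
Qed.

Lemma ricci_basis (alpha : 'I_k -> 'rV[R]_k) :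
  (forall i j, dotv (alpha i) (alpha j) = (i == j)%:R) ->
  forall Y, ricci Rm Y = \sum_(l < k) Rm (alpha l) Y (alpha l) Y.
Proof.
move=> ortho Y.
pose A : 'M[R]_k := \matrix_(l, i) alpha l 0 i.
have AAt : A *m A^T = 1%:M.
  apply/matrixP => l l'; rewrite !mxE -ortho /dotv mxE.
  by apply: eq_bigr => i _; rewrite !mxE.
have AtA := mulmx1C AAt.
have dec : forall l, alpha l = \sum_i alpha l 0 i *: @basisv R k i.
  move=> l; apply/rowP => j; rewrite summxE (bigD1 j) //= big1 => [|i ij].
    by rewrite !mxE eqxx mulr1 addr0.
  by rewrite !mxE (negbTE ij) mulr0.
have E : forall l, Rm (alpha l) Y (alpha l) Y = \sum_i \sum_j
    (alpha l 0 i * alpha l 0 j) * Rm (@basisv R k i) Y (@basisv R k j) Y.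
  move=> l.
  have -> : Rm (alpha l) Y (alpha l) Y = Rm (\sum_i alpha l 0 i *: @basisv R k i) Y
       (\sum_i alpha l 0 i *: @basisv R k i) Y by rewrite -dec.
  rewrite Rm_sum1; apply: eq_bigr => i _; rewrite Rm_sum3 mulr_sumr.
  by apply: eq_bigr => j _; rewrite mulrA.
rewrite (eq_bigr _ (fun l _ => E l)) exchange_big /ricci; apply: eq_bigr => i _.
apply: esym; rewrite exchange_big (bigD1 i) //= [X in _ + X]big1 => [|j ij].
  rewrite -mulr_suml.
  have -> : \sum_l alpha l 0 i * alpha l 0 i = (A^T *m A) i i.
    by rewrite mxE; apply: eq_bigr => l _; rewrite !mxE.
  by rewrite AtA mxE eqxx mul1r addr0.
rewrite -mulr_suml.
have -> : \sum_l alpha l 0 i * alpha l 0 j = (A^T *m A) j i.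
  by rewrite mxE; apply: eq_bigr => l _; rewrite !mxE mulrC.
by rewrite AtA mxE (negbTE ij) mul0r.
Qed.
End Curv.
Lemma sum_neq (R : rcfType) (m : nat) (l : 'I_m) :
  \sum_(k < m) ((l != k)%:R : R) = m%:R - 1.
Proof.
have -> : \sum_(k < m) ((l != k)%:R : R) = \sum_(k < m) (1 - (l == k)%:R).
  by apply: eq_bigr => k _; case: eqP => _; rewrite ?subrr ?subr0.
rewrite sumrB sumr_const card_ord (bigD1 l) //= eqxx big1 ?addr0 //.
by move=> k; rewrite eq_sym => /negbTE ->.
Qed.

Lemma key (R : rcfType) (m : nat) (sigma : R) (mu : 'I_m -> R)
  (K : 'I_m -> 'I_m -> R) :
  0 < sigma -> (forall l, 0 <= mu l) ->
  (forall l k, l != k -> mu l + mu k <= 1) ->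
  (forall l k, K l k = K k l) -> (forall l, K l l = 0) ->
  (forall l k, l != k -> - sigma < K l k) ->
  (forall l, (m%:R - 1) * sigma <= \sum_k K l k) ->
  0 <= \sum_l \sum_k (mu l * (1 - mu k) * K l k
                      - sigma * (l != k)%:R * (mu l * mu k)).
Proof.
move=> sp mu0 mu1 Ks K0 Kl Ric.
pose d (l k : 'I_m) : R := (l != k)%:R.
pose A l k := (mu l + mu k - 4 * mu l * mu k) * (K l k + sigma * d l k).
pose D l k := K l k - sigma * d l k.
pose u l k := mu l * (K l k + sigma * d l k).
have pt : forall l k, 4 * (mu l * (1 - mu k) * K l k
                      - sigma * (l != k)%:R * (mu l * mu k))
    = (A l k + 2 * (mu l * D l k)) + (u l k - u k l).
  move=> l k; rewrite /A /D /u /d (Ks k l) (eq_sym k l); ring.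
have S4 : \sum_l \sum_k 4 * (mu l * (1 - mu k) * K l k
                      - sigma * (l != k)%:R * (mu l * mu k))
   = \sum_l \sum_k (A l k + 2 * (mu l * D l k))
     + (\sum_l \sum_k u l k - \sum_l \sum_k u k l).
  rewrite -sumrB -big_split; apply: eq_bigr => l _.
  rewrite -sumrB -big_split; apply: eq_bigr => k _; exact: pt.
rewrite [X in _ - X]exchange_big /= subrr addr0 in S4.
suff : 0 <= 4 * \sum_l \sum_k (mu l * (1 - mu k) * K l k
                      - sigma * (l != k)%:R * (mu l * mu k)).
  by rewrite pmulr_rge0.
rewrite mulr_sumr; under eq_bigr do rewrite mulr_sumr; rewrite S4.
rewrite (eq_bigr _ (fun l _ => big_split _ _ _ _ _)) big_split addr_ge0 //.
  apply: sumr_ge0 => l _; apply: sumr_ge0 => k _; rewrite /A.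
  have [lk|nlk] := eqVneq l k.
    by rewrite lk K0 /d eqxx mulr0 addr0 mulr0.
  apply: mulr_ge0.
    have h1 := mu1 _ _ nlk; have h2 := mu0 l; have h3 := mu0 k.
    have h4 : 0 <= (mu l - mu k) ^+ 2 by apply: sqr_ge0.
    have h5 : 0 <= (mu l + mu k) * (1 - (mu l + mu k)) by apply: mulr_ge0; lra.
    nra.
  rewrite /d nlk mulr1; have := Kl _ _ nlk; lra.
apply: sumr_ge0 => l _; rewrite -mulr_sumr mulr_ge0 //.
rewrite -mulr_sumr mulr_ge0 //.
rewrite /D sumrB -mulr_sumr /d sum_neq; have := Ric l; lra.
Qed.
Lemma dot0 (R : rcfType) (k : nat) (v : 'rV[R]_k) : dotv v v = 0 -> v = 0.
Proof.
rewrite /dotv mxE => /eqP; rewrite psumr_eq0 => [H|i _]; last first.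
  by rewrite !mxE -expr2 sqr_ge0.
apply/rowP => j; have /implyP /(_ isT) := allP H j (mem_index_enum _).
by rewrite !mxE mulf_eq0 orbb => /eqP ->.
Qed.

Lemma dotbeta (R : rcfType) (m n : nat) (df : 'M[R]_(m, n)) (alpha : 'I_m -> 'rV[R]_m)
  (lam : 'I_m -> R) :
  (forall i j, dotv (alpha i) (alpha j) = (i == j)%:R) ->
  (forall i, alpha i *m (df *m df^T) = lam i ^+ 2 *: alpha i) ->
  forall l k, dotv (alpha l *m df) (alpha k *m df) = lam l ^+ 2 * (l == k)%:R.
Proof.
move=> ortho eig l k; rewrite /dotv trmx_mul !mulmxA -(mulmxA (alpha l)) eig.
by rewrite -scalemxAl mxE -ortho.
Qed.

Theorem lemma3p6 (R : rcfType) (m n : nat) (hm : (2 <= m)%N) (sigma : R)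
  (RM : 'rV[R]_m -> 'rV[R]_m -> 'rV[R]_m -> 'rV[R]_m -> R)
  (RN : 'rV[R]_n -> 'rV[R]_n -> 'rV[R]_n -> 'rV[R]_n -> R)
  (df : 'M[R]_(m, n)) (alpha : 'I_m -> 'rV[R]_m) (lam : 'I_m -> R) :
  0 < sigma ->
  curv_tensor RM -> curv_tensor RN ->
  sec_gt RM sigma ->
  ric_ge RM ((m%:R - 1) * sigma) ->
  sec_le RN sigma ->
  (* alpha is a g_M-orthonormal eigenbasis of f^*g_N with eigenvalues lam_i^2 *)
  (forall i j, dotv (alpha i) (alpha j) = (i == j)%:R) ->
  (forall i, alpha i *m (df *m df^T) = lam i ^+ 2 *: alpha i) ->
  (forall i, 0 <= lam i) ->
  (forall i j : 'I_m, (i <= j)%N -> lam i <= lam j) ->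
  (* strictly area decreasing *)
  (forall i j : 'I_m, (i < j)%N -> lam i * lam j < 1) ->
  let e := fun i => (Num.sqrt (1 + lam i ^+ 2))^-1 *: alpha i in
  0 <= \sum_(l < m) \sum_(k < m)
         (lam l ^+ 2 * RM (e l) (e k) (e l) (e k)
          - RN (e l *m df) (e k *m df) (e l *m df) (e k *m df)).
Proof.
move=> sp cM cN secM ricM secN ortho eig lam0 _ area; rewrite /=.
pose a i := 1 + lam i ^+ 2.
have a0 : forall i, 0 < a i by move=> i; rewrite /a; have := sqr_ge0 (lam i); lra.
have an0 : forall i, a i != 0 by move=> i; rewrite gt_eqF.
pose mu i := lam i ^+ 2 / a i.
pose beta i := alpha i *m df.
pose K l k := RM (alpha l) (alpha k) (alpha l) (alpha k).
pose N l k := RN (beta l) (beta k) (beta l) (beta k).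
have db := dotbeta ortho eig.
have Nb : forall l k, N l k <= sigma * (l != k)%:R * (lam l ^+ 2 * lam k ^+ 2).
  move=> l k; have [<-|lk] := eqVneq l k.
    by rewrite /N (Rm_diag cN) /= mulr0 mul0r.
  rewrite /= mulr1.
  have w : wedge2 (beta l) (beta k) = lam l ^+ 2 * lam k ^+ 2.
    by rewrite /wedge2 /beta !db !eqxx (negbTE lk) !mulr1 mulr0 expr0n /= subr0.
  have [wp|] := ltP 0 (wedge2 (beta l) (beta k)); first by rewrite -w; exact: secN.
  rewrite w => wle.
  have : lam l ^+ 2 * lam k ^+ 2 = 0.
    by apply/eqP; rewrite eq_le wle mulr_ge0 // sqr_ge0.
  move/eqP; rewrite mulf_eq0 => /orP [] /eqP h.
    have : beta l = 0 by apply: dot0; rewrite /beta db eqxx h mul0r.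
    by rewrite /N => ->; rewrite (Rm_01 cN) h !mul0r mulr0.
  have : beta k = 0 by apply: dot0; rewrite /beta db eqxx h mul0r.
  by rewrite /N => ->; rewrite (Rm_sym cN) (Rm_01 cN) h !mulr0.
have := @key R m sigma mu K sp.
have mu0 : forall l, 0 <= mu l.
  by move=> l; rewrite /mu divr_ge0 ?sqr_ge0 // ltW.
have mu1 : forall l k, l != k -> mu l + mu k <= 1.
  move=> l k lk.
  have ll : lam l * lam k < 1.
    case: (ltngtP l k) => h; first exact: area.
      by rewrite mulrC; apply: area.
    by move: lk; rewrite (val_inj h) eqxx.
  have E : mu l + mu k - 1 = (lam l ^+ 2 * lam k ^+ 2 - 1) / (a l * a k).
    by rewrite /mu /a; field; rewrite -/(a l) -/(a k) ?an0 ?mulf_neq0 ?an0.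
  suff : mu l + mu k - 1 <= 0 by lra.
  rewrite E mulr_le0_ge0 //; last by rewrite invr_ge0 mulr_ge0 // ltW.
  have p0 : 0 <= lam l * lam k by rewrite mulr_ge0.
  rewrite -exprMn; move: p0 ll; set p := lam l * lam k; nra.
have Ks : forall l k, K l k = K k l by move=> l k; rewrite /K (Rm_sym cM).
have K0 : forall l, K l l = 0 by move=> l; rewrite /K (Rm_diag cM).
have Kl : forall l k, l != k -> - sigma < K l k.
  move=> l k lk; have w : wedge2 (alpha l) (alpha k) = 1.
    by rewrite /wedge2 !ortho !eqxx (negbTE lk) mulr1 expr0n /= subr0.
  by have := secM (alpha l) (alpha k); rewrite w ltr01 mulr1 => /(_ isT).
have Ric : forall l, (m%:R - 1) * sigma <= \sum_k K l k.
  move=> l; have := ricM (alpha l); rewrite (ricci_basis cM ortho) ortho eqxx mulr1.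
  by under eq_bigr do rewrite (Rm_sym cM).
move=> /(_ mu0 mu1 Ks K0 Kl Ric) H; apply: (le_trans H).
apply: ler_sum => l _; apply: ler_sum => k _.
rewrite -!scalemxAl -/(beta l) -/(beta k).
rewrite !(Rm_scale1 cM, Rm_scale2 cM, Rm_scale3 cM, Rm_scale4 cM).
rewrite !(Rm_scale1 cN, Rm_scale2 cN, Rm_scale3 cN, Rm_scale4 cN).
rewrite -/(K l k) -/(N l k).
have sq : forall i, (Num.sqrt (1 + lam i ^+ 2))^-1 * (Num.sqrt (1 + lam i ^+ 2))^-1
    = (a i)^-1.
  by move=> i; rewrite -invfM -expr2 sqr_sqrtr // ltW // a0.
set sl := (Num.sqrt (1 + lam l ^+ 2))^-1; set sk := (Num.sqrt (1 + lam k ^+ 2))^-1.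
have E : forall X, sl * (sk * (sl * (sk * X))) = (sl * sl) * (sk * sk) * X.
  by move=> X; ring.
rewrite !E /sl /sk !sq.
have eq1 : lam l ^+ 2 * ((a l)^-1 * (a k)^-1 * K l k) = mu l * (1 - mu k) * K l k.
  by rewrite /mu /a; field; rewrite -/(a l) -/(a k) ?an0.
have eq2 : sigma * (l != k)%:R * (mu l * mu k)
    = (a l)^-1 * (a k)^-1 * (sigma * (l != k)%:R * (lam l ^+ 2 * lam k ^+ 2)).
  by rewrite /mu /a; field; rewrite -/(a l) -/(a k) ?an0.
rewrite eq1 eq2 lerD2l lerN2 ler_wpM2l //.
by rewrite mulr_ge0 // invr_ge0 ltW.
Qed.
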